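(* Let $\mathbb S[\boldsymbol\kappa]$ be a $k\times k$ unstable-negative feedback such that one of its $(k-1)\times(k-1)$ principal submatrices is Hurwitz-stable. Then $\mathbb S[\boldsymbol\kappa]$ is $D$-Hopf.
   Context: For a reaction network with reactant coefficients $s^j_m$ and stoichiometric matrix $\mathbb S$, a $k$-Child-Selection $\boldsymbol\kappa=(\kappa,E_\kappa,J)$ is a bijection $J:\kappa\to E_\kappa$ between $k$ species and $k$ reactions with $s^{J(m)}_m>0$; its CS-matrix is $\mathbb S[\boldsymbol\kappa]_{ml}=\mathbb S_{m,J(l)}$. Hurwitz-stable: all eigenvalues have negative real part; Hurwitz-unstable: some eigenvalue has positive real part. An unstable core is a Hurwitz-unstable CS-matrix with no Hurwitz-unstable proper principal submatrix; a $k\times k$ unstable core with $\operatorname{sign}\det=(-1)^k$ is an unstable-negative feedback. Inertia: numbers of eigenvalues with negative, positive, zero real part. $A$ is $D$-Hopf if there exist an invertible principal submatrix $A[\kappa]$ and positive diagonal $D_1,D_2$ with $\operatorname{inertia}(A[\kappa]D_1)\ne\operatorname{inertia}(A[\kappa]D_2)$. *)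

(* Defs.v *)
From HB Require Import structures.
From mathcomp Require Import all_boot all_order all_algebra.
From mathcomp Require Import complex.
Set Implicit Arguments. Unset Strict Implicit. Unset Printing Implicit Defensive.
Import Order.TTheory GRing.Theory Num.Theory.
Local Open Scope ring_scope.

Section Defs.
Variable R : rcfType.
Local Notation C := (R[i]).

Definition cmx n (A : 'M[R]_n) : 'M[C]_n := map_mx (real_complex R) A.

Definition eigenvalue n (A : 'M[R]_n) (l : C) : bool :=
  root (char_poly (cmx A)) l.

Definition Hurwitz_stable n (A : 'M[R]_n) : Prop :=
  forall l, eigenvalue A l -> Re l < 0.

Definition Hurwitz_unstable n (A : 'M[R]_n) : Prop :=
  exists l, eigenvalue A l /\ 0 < Re l.

Definition eigs n (A : 'M[R]_n) : seq C :=
  sval (closed_field_poly_normal (char_poly (cmx A))).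

Definition inertia n (A : 'M[R]_n) : nat * nat * nat :=
  (count (fun l : C => Re l < 0) (eigs A),
   count (fun l : C => 0 < Re l) (eigs A),
   count (fun l : C => Re l == 0) (eigs A)).

Definition psubmx n (A : 'M[R]_n) (kap : {set 'I_n}) : 'M[R]_#|kap| :=
  \matrix_(i, j) A (enum_val i) (enum_val j).

Definition pos_diag n (D : 'M[R]_n) : Prop :=
  exists d : 'rV[R]_n, D = diag_mx d /\ forall i, 0 < d 0 i.

Definition unstable_core n (A : 'M[R]_n) : Prop :=
  Hurwitz_unstable A /\
  forall kap : {set 'I_n}, kap \proper [set: 'I_n] -> ~ Hurwitz_unstable (psubmx A kap).

Definition unstable_negative_feedback n (A : 'M[R]_n) : Prop :=
  unstable_core A /\ Num.sg (\det A) = (-1) ^+ n.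

Definition D_Hopf n (A : 'M[R]_n) : Prop :=
  exists kap : {set 'I_n},
    psubmx A kap \in unitmx /\
    exists D1 D2 : 'M[R]_#|kap|, pos_diag D1 /\ pos_diag D2 /\
      inertia (psubmx A kap *m D1) <> inertia (psubmx A kap *m D2).

(* Reaction network with m species, e reactions, reactant coefficients s and
   stoichiometric matrix S.  A k-child-selection is given by an injective
   enumeration kap : 'I_k -> species and the reactions J : 'I_k -> reactions
   (J i is the reaction selected for species kap i), J injective,
   with s (kap i) (J i) > 0. *)
Definition child_selection m e k (s : 'M[R]_(m, e))
    (kap : 'I_k -> 'I_m) (J : 'I_k -> 'I_e) : Prop :=
  injective kap /\ injective J /\ forall i, 0 < s (kap i) (J i).

Definition CS_matrix m e k (S : 'M[R]_(m, e))
    (kap : 'I_k -> 'I_m) (J : 'I_k -> 'I_e) : 'M[R]_k :=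
  \matrix_(i, l) S (kap i) (J l).

End Defs.

(* Main.v *)
Require Import Defs.
From HB Require Import structures.
From mathcomp Require Import all_boot all_order all_algebra.
From mathcomp Require Import complex polyrcf.
From mathcomp Require Import ring lra.
Set Implicit Arguments. Unset Strict Implicit. Unset Printing Implicit Defensive.
Import Order.TTheory GRing.Theory Num.Theory.
Local Open Scope ring_scope.


Section Core.
Variable R : rcfType.
Local Notation C := (R[i]).
Local Notation N := (@Normc.normc R).
Local Notation Re := (@complex.Re R).

Lemma N_ge0 (x : C) : 0 <= N x.
Proof. by case: x => a b /=; rewrite sqrtr_ge0. Qed.

Lemma N_D (x y : C) : N (x + y) <= N x + N y.
Proof. exact: le_normcD. Qed.

Lemma N_M (x y : C) : N (x * y) = N x * N y.
Proof. exact: Normc.normcM. Qed.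

Lemma N_N (x : C) : N (- x) = N x.
Proof. exact: normcN. Qed.

Lemma N_R (x : R) : N (x%:C)%C = `|x|.
Proof. by rewrite /= expr0n /= addr0 sqrtr_sqr. Qed.

Lemma Re_le_N (x : C) : Re x <= N x.
Proof.
have := normc_ge_Re x; rewrite normc_def lecR => h.
apply: le_trans (ler_norm _) _; apply: le_trans h _; by case: x.
Qed.

Lemma N_X (x : C) n : N (x ^+ n) = N x ^+ n.
Proof.
elim: n => [|n IH]; first by rewrite !expr0 Normc.normc1.
by rewrite !exprS N_M IH.
Qed.

Lemma N_sum (I : Type) (s : seq I) (F : I -> C) :
  N (\sum_(i <- s) F i) <= \sum_(i <- s) N (F i).
Proof.
elim/big_ind2: _ => [|a b c d h1 h2|i _]; first by rewrite Normc.normc0.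
  by apply: le_trans (N_D _ _) _; apply: lerD.
by [].
Qed.

Lemma N_prod (I : Type) (s : seq I) (F : I -> C) :
  N (\prod_(i <- s) F i) = \prod_(i <- s) N (F i).
Proof.
elim/big_ind2: _ => [|a b c d h1 h2|i _]; first by rewrite Normc.normc1.
  by rewrite N_M h1 h2.
by [].
Qed.


Definition cN (p : {poly C}) := \sum_(i < size p) N p`_i.

Lemma cN_ge0 p : 0 <= cN p.
Proof. by apply: sumr_ge0 => i _; exact: N_ge0. Qed.

Lemma horner_bound (p : {poly C}) (z : C) :
  N p.[z] <= cN p * (1 + N z) ^+ (size p).-1.
Proof.
rewrite horner_coef /cN big_distrl /=.
have H := @N_sum (ordinal (size p)) (index_enum _) (fun i => p`_i * z ^+ i). apply: le_trans H _. apply: ler_sum => i _.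
rewrite N_M N_X; apply: ler_wpM2l; first exact: N_ge0.
have h0 := N_ge0 z.
apply: (le_trans (y := (1 + N z) ^+ i)).
  by apply: lerXn2r; rewrite ?nnegrE //; lra.
apply: ler_weXn2l; first lra.
by rewrite -ltnS (leq_trans (ltn_ord i)) // leqSpred.
Qed.

Lemma horner_sub0 (p : {poly C}) (z : C) : N z <= 1 ->
  N (p.[z] - p.[0]) <= cN p * N z.
Proof.
move=> hz; have h0 := N_ge0 z.
rewrite horner_coef0 horner_coef /cN.
rewrite -(big_mkord xpredT (fun i => p`_i * z ^+ i)).
rewrite -(big_mkord xpredT (fun i => N p`_i)).
case Hs: (size p) => [|n]; first by rewrite !big_geq // sub0r N_N nth_default ?Hs // Normc.normc0 mul0r.
rewrite !big_nat_recl // expr0 mulr1 addrC addKr mulrDl.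
have H := N_sum (index_iota 0 n) (fun i => p`_i.+1 * z ^+ i.+1).
apply: le_trans H _.
apply: (le_trans (y := (\sum_(0 <= i < n) N p`_i.+1) * N z)); last first.
  by rewrite lerDr mulr_ge0 // N_ge0.
rewrite big_distrl; apply: ler_sum => i _.
rewrite N_M N_X; apply: ler_wpM2l; first exact: N_ge0.
rewrite exprS -[X in _ <= X]mulr1; apply: ler_wpM2l => //.
exact: exprn_ile1.
Qed.


Lemma ReD (x y : C) : Re (x + y) = Re x + Re y.
Proof. by case: x; case: y. Qed.
Lemma ReN (x : C) : Re (- x) = - Re x.
Proof. by case: x. Qed.
Lemma ReMR (x : C) (a : R) : Re (x * (a%:C)%C) = Re x * a.
Proof. by case: x => b c /=; rewrite mulr0 subr0. Qed.
Lemma ReRM (a : R) (x : C) : Re ((a%:C)%C * x) = a * Re x.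
Proof. by case: x => b c /=; rewrite mul0r subr0. Qed.
Lemma ReN_le (x : C) : - N x <= Re x.
Proof. by have := Re_le_N (- x); rewrite ReN N_N lerNl. Qed.

Lemma prod_const_seq (T : Type) (s : seq T) (x : R) : \prod_(i <- s) x = x ^+ size s.
Proof. by elim: s => [|a s IH]; rewrite ?big_nil ?expr0 // big_cons IH exprS. Qed.

Definition cm (m : C) : R := (- Re m) / (1 + N m - Re m).

Lemma cm_gt0 m : Re m < 0 -> 0 < cm m.
Proof. move=> h; have := N_ge0 m; rewrite /cm => h2; apply: divr_gt0; lra. Qed.

Lemma factor_lb (m z : C) : Re m < 0 -> 0 <= Re z ->
  cm m * (1 + N z) <= N (z - m).
Proof.
move=> hm hz.
have w1 : Re z - Re m <= N (z - m) by rewrite -ReN -ReD Re_le_N.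
have w2 : N z <= N (z - m) + N m.
  by have := N_D (z - m) m; rewrite subrK.
have h1 := N_ge0 m; have h2 := N_ge0 z.
rewrite /cm mulrAC ler_pdivrMr; last lra.
set w := N (z - m) in w1 w2 *.
have [le|lt] := lerP (N z) (N m - Re m).
  nra.
nra.
Qed.

Lemma q_lb (mu : seq C) (z : C) : (forall m, m \in mu -> Re m < 0) -> 0 <= Re z ->
  (\prod_(m <- mu) cm m) * (1 + N z) ^+ size mu <= N (\prod_(m <- mu) ('X - m%:P)).[z].
Proof.
move=> hmu hz; rewrite horner_prod N_prod -prod_const_seq -big_split /=.
rewrite big_seq_cond [X in _ <= X]big_seq_cond.
apply: ler_prod => m /andP[/hmu hm _].
rewrite hornerXsubC factor_lb // andbT mulr_ge0 //; first exact/ltW/cm_gt0.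
have := N_ge0 z; lra.
Qed.


Lemma core (mu : seq C) (r : {poly C}) (Q0 P0 : R) :
  (forall m, m \in mu -> Re m < 0) -> (size r <= (size mu).+1)%N ->
  (\prod_(m <- mu) ('X - m%:P)).[0] = (Q0%:C)%C -> 0 < Q0 ->
  r.[0] = (P0%:C)%C -> 0 < P0 ->
  exists e : R, 0 < e /\ forall z,
    root ('X * \prod_(m <- mu) ('X - m%:P) + ((e%:C)%C)%:P * r) z -> Re z < 0.
Proof.
set q := \prod_(m <- mu) _ => hmu hsr hq0 Q0p hr0 P0p.
set c := \prod_(m <- mu) cm m.
have cp : 0 < c by rewrite /c big_seq; apply: prodr_gt0 => m hm; exact: cm_gt0 (hmu _ hm).
have Crp := cN_ge0 r; have Cqp := cN_ge0 q.
set Cr := cN r in Crp *; set Cq := cN q in Cqp *.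
set K := Cr / c.
have Kp : 0 <= K by apply: divr_ge0 => //; exact: ltW.
set X := Cr * K + Cq * (K * K).
have Xp : 0 <= X by rewrite /X; nra.
exists (Num.min (1 / (1 + K)) (P0 / (1 + X))).
have e1 : Num.min (1 / (1 + K)) (P0 / (1 + X)) <= 1 / (1 + K) by rewrite ge_min lexx.
have e2 : Num.min (1 / (1 + K)) (P0 / (1 + X)) <= P0 / (1 + X) by rewrite ge_min lexx orbT.
have ep : 0 < Num.min (1 / (1 + K)) (P0 / (1 + X)).
  by rewrite lt_min !divr_gt0 //; lra.
set e := Num.min _ _ in e1 e2 ep *.
split => // z; rewrite rootE !hornerE -/q => /eqP heq.
rewrite ltNge; apply/negP => hz.
have nz := N_ge0 z.
have eK : e * K <= 1.
  move: e1; rewrite ler_pdivlMr; last lra. nra.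
have eX : e * X < P0.
  move: e2; rewrite ler_pdivlMr; last lra. nra.
have hq := q_lb hmu hz; rewrite -/q -/c in hq.
have hr := horner_bound r z; rewrite -/Cr in hr.
set T := (1 + N z) ^+ size mu in hq.
have Tp : 0 < T by apply: exprn_gt0; lra.
have hr' : N r.[z] <= Cr * T.
  apply: le_trans hr _; apply: ler_wpM2l => //.
  apply: ler_weXn2l; first lra.
  by move: hsr; case: (size r).
have heq1 : N z * N q.[z] = e * N r.[z].
  have : z * q.[z] = - ((e%:C)%C * r.[z]) by apply/eqP; rewrite -addr_eq0 heq.
  move=> /(congr1 N); rewrite N_N !N_M N_R ger0_norm //; exact: ltW.
have nzK : N z <= e * K.
  have h3 : N z * (c * T) <= e * (Cr * T).
    apply: le_trans (_ : N z * N q.[z] <= _).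
      by apply: ler_wpM2l.
    by rewrite heq1; apply: ler_wpM2l => //; exact: ltW.
  rewrite /K mulrA ler_pdivlMr //.
  have : N z * c * T <= e * Cr * T by rewrite -!mulrA.
  by rewrite ler_pM2r.
have nz1 : N z <= 1 by apply: le_trans nzK eK.
have hu := horner_sub0 q nz1; rewrite -/Cq hq0 in hu.
have hv := horner_sub0 r nz1; rewrite -/Cr hr0 in hv.
have [u {}hu equ] : exists2 u, N u <= Cq * N z & q.[z] = (Q0%:C)%C + u.
  by exists (q.[z] - (Q0%:C)%C) => //; rewrite addrC subrK.
have [v {}hv eqv] : exists2 v, N v <= Cr * N z & r.[z] = (P0%:C)%C + v.
  by exists (r.[z] - (P0%:C)%C) => //; rewrite addrC subrK.
move: heq; rewrite equ eqv !mulrDr => /(congr1 Re).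
rewrite !ReD ReMR ReRM (_ : Re 0 = 0) // => hre.
have hzu := ReN_le (z * u); rewrite N_M in hzu.
have hvv := ReN_le v.
have nu := N_ge0 u; have nv := N_ge0 v.
have hev : - (e * N v) <= e * Re v.
  by rewrite -mulrN ler_wpM2l // ltW.
have hfin : Re z * Q0 <= - (e * P0) + N z * N u + e * N v.
  have -> : Re z * Q0 = - (e * P0) - Re (z * u) - e * Re v.
    move: hre; rewrite /= ReRM; lra.
  lra.

have hb : N z * N u + e * N v <= e * e * X.
  have h4 : N z * N u <= Cq * (e * K) * (e * K).
    apply: le_trans (_ : N z * (Cq * N z) <= _); first by apply: ler_wpM2l.
    rewrite mulrCA -mulrA; apply: ler_wpM2l => //; apply: ler_pM => //.
  have h5 : e * N v <= e * (Cr * (e * K)).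
    apply: ler_wpM2l; first exact: ltW.
    apply: le_trans hv _; nra.
  rewrite /X; nra.
have : Re z * Q0 < 0 by nra.
nra.
Qed.

End Core.


Lemma eig_transfer1 (F : fieldType) n1 n2 (M1 : 'M[F]_n1) (M2 : 'M[F]_n2)
  (h : 'I_n2 -> 'I_n1) : bijective h -> (forall i l, M2 i l = M1 (h i) (h l)) ->
  forall z, eigenvalue M2 z -> eigenvalue M1 z.
Proof.
case=> g hg gh hM z /eigenvalueP [v hv vn0]; apply/eigenvalueP.
exists (\row_x v 0 (g x)); last first.
  apply: contra vn0 => /eqP w0; apply/eqP/rowP => i.
  by have := congr1 (fun w : 'rV[F]_n1 => w 0 (h i)) w0; rewrite !mxE hg.
apply/rowP => x; rewrite !mxE.
rewrite (reindex h) /=; last by exists g => y _; rewrite ?hg ?gh.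
have := congr1 (fun w : 'rV[F]_n2 => w 0 (g x)) hv; rewrite !mxE => <-.
apply: eq_bigr => i _; rewrite !mxE hg hM gh //.
Qed.

Lemma eig_transfer2 (F : fieldType) n1 n2 (M1 : 'M[F]_n1) (M2 : 'M[F]_n2)
  (h : 'I_n2 -> 'I_n1) : bijective h -> (forall i l, M2 i l = M1 (h i) (h l)) ->
  forall z, eigenvalue M1 z -> eigenvalue M2 z.
Proof.
move=> hb; have [g hg gh] := hb => hM.
apply: (eig_transfer1 (h := g)); first by exists h.
by move=> x y; rewrite -{1}(gh x) -{1}(gh y) hM.
Qed.

Lemma size_sub_monic (F : nzRingType) (p q : {poly F}) m : p \is monic -> q \is monic ->
  size p = m.+1 -> size q = m.+1 -> (size (p - q)%R <= m)%N.
Proof.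
move=> /monicP lp /monicP lq sp sq; apply/leq_sizeP => i hi.
rewrite coefB; move: hi; rewrite leq_eqVlt => /orP[/eqP <-|hi].
  by move: lp lq; rewrite /lead_coef sp sq /= => -> ->; rewrite subrr.
by rewrite !nth_default ?subrr // ?sp ?sq.
Qed.


Section M.
Variable R : rcfType.
Local Notation C := (R[i]).
Local Notation Re := (@complex.Re R).

Lemma eigs_mem n (M : 'M[R]_n) z : (z \in eigs M) = Defs.eigenvalue M z.
Proof.
rewrite /eigs; case: closed_field_poly_normal => s /= hs.
by rewrite /Defs.eigenvalue [in RHS]hs (monicP (char_poly_monic _)) scale1r root_prod_XsubC.
Qed.

Lemma eig0 n (M : 'M[R]_n) : Defs.eigenvalue M 0 = (\det M == 0).
Proof.
rewrite /Defs.eigenvalue rootE horner_coef0 char_poly_det mulf_eq0 signr_eq0 /=.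
by rewrite /cmx det_map_mx fmorph_eq0.
Qed.

Lemma eig_real n (M : 'M[R]_n) (t : R) :
  Defs.eigenvalue M ((t%:C)%C) = root (char_poly M) t.
Proof.
by rewrite /Defs.eigenvalue /cmx -map_char_poly rootE horner_map fmorph_eq0.
Qed.

Lemma charpoly0_pos n (B : 'M[R]_n) :
  (forall z, Defs.eigenvalue B z -> Re z < 0) -> 0 < (char_poly B).[0].
Proof.
move=> hB; set Q := char_poly B.
have noroot : forall t, 0 <= t -> ~~ root Q t.
  move=> t t0; apply/negP; rewrite -eig_real => /hB /=; lra.
have lc : lead_coef Q = 1 by apply/monicP; exact: char_poly_monic.
have [N0 hN0] : exists N0, forall x, N0 <= x -> lead_coef Q <= Q.[x].
  by apply: poly_pinfty_gt_lc; rewrite lc ltr01.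
set b := Num.max N0 0.
have hb : 1 <= Q.[b] by rewrite -lc; apply: hN0; rewrite le_max lexx.
rewrite ltNge; apply/negP => h0.
have b0 : 0 <= b by rewrite le_max lexx orbT.
have hprod : Q.[0] * Q.[b] <= 0 by nra.
have [x hx rx] := polyrcf.poly_ivt b0 hprod.
move: hx; rewrite in_itv /= => /andP[x0 _].
by move: (noroot x x0); rewrite rx.
Qed.


Definition scol n (A : 'M[R]_n.+1) (j : 'I_n.+1) (e : R) : 'M[R]_n.+1 :=
  \matrix_(x, y) (A x y * (if y == j then e else 1)).
Definition Bp n (A : 'M[R]_n.+1) (j : 'I_n.+1) : 'M[R]_n :=
  \matrix_(i, l) A (lift j i) (lift j l).

Lemma lift_neq n (j : 'I_n.+1) i : (lift j i == j) = false.
Proof. by rewrite eq_sym (negbTE (neq_lift _ _)). Qed.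

Lemma realC0 : ((0:R)%:C)%C = 0 :> C. Proof. by []. Qed.

Lemma charpoly_scol0 n (A : 'M[R]_n.+1) j :
  char_poly (cmx (scol A j 0)) = 'X * char_poly (cmx (Bp A j)).
Proof.
rewrite /char_poly (expand_det_col _ j) (bigD1 j) //= big1 ?addr0; last first.
  move=> i hij; rewrite !mxE eqxx mulr0 (negbTE hij) mulr0n.
  by rewrite realC0 polyC0 subr0 mul0r.
rewrite !mxE eqxx mulr0 mulr1n realC0 polyC0 subr0; congr (_ * _).
rewrite /cofactor -signr_odd addnn odd_double expr0 mul1r; congr (\det _).
apply/matrixP => i l; rewrite !mxE (inj_eq lift_inj) lift_neq mulr1 //.
Qed.

Lemma charpoly_scol n (A : 'M[R]_n.+1) j (e : R) :
  char_poly (cmx (scol A j e)) =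
  ((1 - e)%:C%C)%:P * char_poly (cmx (scol A j 0)) + ((e%:C)%C)%:P * char_poly (cmx A).
Proof.
rewrite /char_poly -det_tr -[\det (char_poly_mx (cmx (scol A j 0)))]det_tr.
rewrite -[\det (char_poly_mx (cmx A))]det_tr.
apply: (@determinant_multilinear _ _ _ _ _ j).
- apply/rowP => i; rewrite !mxE eqxx.
  move: ('X *+ _) => X.
  rewrite !rmorphM !rmorphB /= !rmorph1 !rmorph0 /=.
  ring.
- by apply/matrixP => i l; rewrite !mxE lift_neq.
- by apply/matrixP => i l; rewrite !mxE lift_neq mulr1.
Qed.


Lemma ReCE (z : C) : Num.Theory.Re z = ((Re z)%:C)%C.
Proof. by rewrite ReJ_add /Num.Theory.Re locked_withE. Qed.
Lemma ltRe (z : C) : (Num.Theory.Re z < 0) = (Re z < 0).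
Proof. by rewrite ReCE -ltcR. Qed.
Lemma gtRe (z : C) : (0 < Num.Theory.Re z) = (0 < Re z).
Proof. by rewrite ReCE -ltcR. Qed.

Lemma Deig_transfer n1 n2 (M1 : 'M[R]_n1) (M2 : 'M[R]_n2) (h : 'I_n2 -> 'I_n1) :
  bijective h -> (forall i l, M2 i l = M1 (h i) (h l)) ->
  forall z, Defs.eigenvalue M2 z <-> Defs.eigenvalue M1 z.
Proof.
move=> hb hM z; rewrite /Defs.eigenvalue -!eigenvalue_root_char.
have hM' : forall i l, cmx M2 i l = cmx M1 (h i) (h l) by move=> i l; rewrite !mxE hM.
split; [exact: eig_transfer1 hb hM' z | exact: eig_transfer2 hb hM' z].
Qed.

End M.

Section Main.
Variable R : rcfType.
Local Notation C := (R[i]).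
Local Notation Re := (@complex.Re R).

Lemma main_succ n (A : 'M[R]_n.+1) : unstable_negative_feedback A ->
  (exists sub : {set 'I_n.+1}, #|sub| = n /\ Hurwitz_stable (psubmx A sub)) ->
  D_Hopf A.
Proof.
move=> [[[l [eigl Rel]] _] sgdet] [sub [csub stabB]].
rewrite gtRe in Rel.
have [j hj] : exists j, j \notin sub.
  case: (pickP [pred x | x \notin sub]) => [j hj|h]; first by exists j.
  have : [set: 'I_n.+1] \subset sub.
    by apply/subsetP => x _; have := h x; rewrite /= => /negbFE.
  by move/subset_leq_card; rewrite cardsT card_ord csub ltnn.
have subE : forall x, (x \in sub) = (x != j).
  have hsub : sub \subset [set~ j].
    by apply/subsetP => x hx; rewrite !inE; apply: contraNneq hj => <-.
  have hc : #|sub| = #|[set~ j]| by rewrite cardsC1 card_ord csub.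
  have eqs := elimT (subset_cardP hc) hsub.
  by move=> x; rewrite eqs in_setC1.
have hin : forall i, lift j i \in sub by move=> i; rewrite subE lift_neq.
pose h := fun i => enum_rank_in (hin i) (lift j i).
have hev : forall i, enum_val (h i) = lift j i.
  by move=> i; rewrite /h enum_rankK_in.
have hbij : bijective h.
  apply: inj_card_bij; last by rewrite !card_ord csub.
  by move=> i1 i2 /(congr1 enum_val); rewrite !hev => /lift_inj.
have stabBp : forall z, Defs.eigenvalue (Bp A j) z -> Re z < 0.
  move=> z hz; rewrite -ltRe; apply: stabB.
  have ht : forall i l', Bp A j i l' = psubmx A sub (h i) (h l').
    by move=> i l'; rewrite !mxE !hev.
  exact: (proj1 (Deig_transfer hbij ht z) hz).
set q := char_poly (cmx (Bp A j)).
have [mu hmu] := closed_field_poly_normal q.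
rewrite (monicP (char_poly_monic _)) scale1r in hmu.
have mu_neg : forall m, m \in mu -> Re m < 0.
  by move=> m hm; apply: stabBp; rewrite /Defs.eigenvalue -/q hmu root_prod_XsubC.
have smu : size mu = n.
  by have := size_char_poly (cmx (Bp A j)); rewrite -/q hmu size_prod_XsubC; case.
have Q0pos := charpoly0_pos stabBp.
have hq0 : (\prod_(m <- mu) ('X - m%:P)).[0] = (((char_poly (Bp A j)).[0])%:C)%C.
  by rewrite -hmu /q /cmx -map_char_poly -realC0 horner_map.
set p1 := char_poly (cmx A).
set r := p1 - 'X * q.
have hsr : (size r <= (size mu).+1)%N.
  rewrite smu; apply: size_sub_monic.
  - exact: char_poly_monic.
  - by rewrite monicMl ?monicX // char_poly_monic.
  - by rewrite size_char_poly.
  rewrite mulrC size_mulX ?size_char_poly //.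
  by rewrite -size_poly_eq0 size_char_poly.
have detA0 : \det A != 0.
  apply/eqP => h0; move: sgdet; rewrite h0 sgr0 => /eqP; rewrite eq_sym signr_eq0.
  by [].
have hr0 : r.[0] = ((((-1) ^+ n.+1 * \det A))%:C)%C.
  rewrite /r hornerD hornerN hornerM hornerX mul0r subr0 /p1 /cmx -map_char_poly.
  by rewrite -realC0 horner_map horner_coef0 char_poly_det.
have P0pos : 0 < (-1) ^+ n.+1 * \det A.
  by rewrite -sgdet -normrEsg normr_gt0.
have [e [ep he]] := core mu_neg hsr hq0 Q0pos hr0 P0pos.
have peq : char_poly (cmx (scol A j e)) =
    'X * \prod_(m <- mu) ('X - m%:P) + ((e%:C)%C)%:P * r.
  rewrite charpoly_scol charpoly_scol0 /r -/q -/p1 hmu.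
  rewrite !rmorphB !rmorph1 /=.
  ring.
have stabAe : forall z, Defs.eigenvalue (scol A j e) z -> Re z < 0.
  by move=> z hz; apply: he; rewrite -peq.
exists [set: 'I_n.+1].
have jT : j \in [set: 'I_n.+1] := in_setT j.
have ebij : bijective (@enum_val _ (mem [set: 'I_n.+1])).
  exists (enum_rank_in jT); first exact: enum_valK_in.
  by move=> y; rewrite enum_rankK_in // in_setT.
split.
  rewrite unitmxE unitfE; apply/negP => /eqP h0.
  have : Defs.eigenvalue (psubmx A [set: 'I_n.+1]) 0 by rewrite eig0 h0.
  rewrite (Deig_transfer ebij (M1 := A)); last by move=> i k'; rewrite mxE.
  by rewrite eig0 (negbTE detA0).
exists (diag_mx (const_mx 1)), (diag_mx (\row_i (if enum_val i == j then e else 1))).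
split; first by exists (const_mx 1); split => // i; rewrite mxE ltr01.
split.
  exists (\row_i (if enum_val i == j then e else 1)); split => // i.
  by rewrite mxE; case: ifP => _ //; exact: ltr01.
move=> /(congr1 (fun t => t.1.2)) /=.
rewrite diag_const_mx mulmx1.
have c2 : count (fun l => 0 < Num.Theory.Re l)
    (eigs (psubmx A [set: 'I_n.+1] *m
           diag_mx (\row_i (if enum_val i == j then e else 1)))) = 0%N.
  apply/eqP; rewrite -leqn0 leqNgt -has_count; apply/hasPn => z.
  rewrite eigs_mem (Deig_transfer ebij (M1 := scol A j e)); last first.
    by move=> i k'; rewrite mul_mx_diag !mxE.
  by move=> /stabAe hz; rewrite gtRe -leNgt ltW.
have c1 : (0 < count (fun l : C => (0 < Num.Theory.Re l)%R) (eigs (psubmx A [set: 'I_n.+1])))%N.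
  rewrite -has_count; apply/hasP; exists l; last by rewrite gtRe.
  rewrite eigs_mem (Deig_transfer ebij (M1 := A)) //.
  by move=> i k'; rewrite mxE.
by move=> heq; rewrite heq c2 in c1.
Qed.

End Main.

Lemma main_gen (R : rcfType) k (A : 'M[R]_k) : unstable_negative_feedback A ->
  (exists sub : {set 'I_k}, #|sub| = k.-1 /\ Hurwitz_stable (psubmx A sub)) ->
  D_Hopf A.
Proof.
case: k A => [|n] A; last exact: main_succ.
move=> [[[l [eigl _]] _] _] _; move: eigl.
by rewrite /Defs.eigenvalue /char_poly det_mx00 rootE hornerE oner_eq0.
Qed.

Unset Implicit Arguments.

Theorem mainTheorem15 (R : rcfType) (m e k : nat)
    (s S : 'M[R]_(m, e)) (kap : 'I_k -> 'I_m) (J : 'I_k -> 'I_e) :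
  child_selection s kap J ->
  unstable_negative_feedback (CS_matrix S kap J) ->
  (exists sub : {set 'I_k}, #|sub| = k.-1 /\
     Hurwitz_stable (psubmx (CS_matrix S kap J) sub)) ->
  D_Hopf (CS_matrix S kap J).
Proof. by move=> _; exact: main_gen. Qed.
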